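(* Consider the two-phase, two-camp opinion game described in the context, with phase-independent camp weights $w_{ig}, w_{ib}$. Let $\mathbf{r}=(\mathbf{I}-\mathbf{w}^T)^{-1}\mathbf{1}$ and $\mathbf{s}=(\mathbf{I}-\mathbf{w}^T)^{-1}(\mathbf{r}\circ\mathbf{w^0})$. Then the good camp's utility is $$\sum_i v_i^{(2)}=\sum_i s_i w_{ii}^0 v_i^0+\sum_i s_i w_{ig}x_i^{(1)}-\sum_i s_i w_{ib}y_i^{(1)}+\sum_i r_i w_{ig}x_i^{(2)}-\sum_i r_i w_{ib}y_i^{(2)},$$ and the following is an optimal strategy for the good camp regardless of the bad camp's strategy (and symmetrically for the bad camp, with $w_{ib}$ in place of $w_{ig}$ and $k_b$ in place of $k_g$), so that the profile of these strategies is a Nash equilibrium: let $M=\max_i \max\{s_i w_{ig}, r_i w_{ig}\}$. If $M\le 0$, invest nothing. If $M>0$, invest the entire budget $k_g$ on a node $i$ attaining $M$; if $\max_i s_i w_{ig}>\max_j r_j w_{jg}$ the whole budget is invested in the first phase (on a maximizer of $s_i w_{ig}$), if $\max_i s_i w_{ig}<\max_j r_j w_{jg}$ the whole budget is invested in the second phase (on a maximizer of $r_j w_{jg}$), and if they are equal either phase is optimal.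
   Context: A social network has node set $N$, $|N|=n$, and a real $n\times n$ matrix $\mathbf{w}=(w_{ij})$ of influence weights with $\sum_j |w_{ij}|<1$ for every $i$ (so $\mathbf{I}-\mathbf{w}$ is invertible). Each node $i$ has an initial opinion $v_i^0$, a weight $w_{ii}^0$ on its initial bias, and weights $w_{ig}, w_{ib}$ attributed to the good and bad camps; with $|w_{ii}^0|+\sum_j|w_{ij}|+|w_{ig}|+|w_{ib}|\le 1$. Vectors $\mathbf{w^0},\mathbf{w_g},\mathbf{w_b}$ collect these; $\circ$ is the entrywise (Hadamard) product and $\mathbf{1}$ the all-ones vector. The good camp chooses nonnegative vectors $\mathbf{x^{(1)}},\mathbf{x^{(2)}}$ with $\sum_i (x_i^{(1)}+x_i^{(2)})\le k_g$, the bad camp nonnegative $\mathbf{y^{(1)}},\mathbf{y^{(2)}}$ with $\sum_i (y_i^{(1)}+y_i^{(2)})\le k_b$ ($k_g,k_b\ge 0$). Opinions evolve by $\mathbf{v^{(0)}}=\mathbf{v^0}$ and, for phases $p=1,2$, $\mathbf{v^{(p)}}=(\mathbf{I}-\mathbf{w})^{-1}(\mathbf{w^0}\circ\mathbf{v^{(p-1)}}+\mathbf{w_g}\circ\mathbf{x^{(p)}}-\mathbf{w_b}\circ\mathbf{y^{(p)}})$. The game is zero-sum: the good camp's utility is $\sum_i v_i^{(2)}$ and the bad camp's is $-\sum_i v_i^{(2)}$. *)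

(* Defs.v *)
From HB Require Import structures.
From mathcomp Require Import all_boot all_order all_algebra.
Set Implicit Arguments. Unset Strict Implicit. Unset Printing Implicit Defensive.
Import Order.TTheory GRing.Theory Num.Theory.
Local Open Scope ring_scope.

Section Game.
Variables (R : realFieldType) (n : nat).

Definition hadam (a b : 'cV[R]_n) : 'cV[R]_n := \col_i (a i 0 * b i 0).

Definition phase (w : 'M[R]_n) (w0 wg wb vprev x y : 'cV[R]_n) : 'cV[R]_n :=
  invmx (1%:M - w) *m (hadam w0 vprev + hadam wg x - hadam wb y).

Definition utility (w : 'M[R]_n) (w0 wg wb v0 x1 x2 y1 y2 : 'cV[R]_n) : R :=
  let v1 := phase w w0 wg wb v0 x1 y1 in
  let v2 := phase w w0 wg wb v1 x2 y2 in
  \sum_i v2 i 0.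

Definition rvec (w : 'M[R]_n) : 'cV[R]_n := invmx (1%:M - w^T) *m const_mx 1.

Definition svec (w : 'M[R]_n) (w0 : 'cV[R]_n) : 'cV[R]_n :=
  invmx (1%:M - w^T) *m hadam (rvec w) w0.

Definition feasible (k : R) (x1 x2 : 'cV[R]_n) : Prop :=
  (forall i, 0 <= x1 i 0) /\ (forall i, 0 <= x2 i 0) /\
  \sum_i (x1 i 0 + x2 i 0) <= k.

Definition point (k : R) (i : 'I_n) : 'cV[R]_n := \col_j (if j == i then k else 0).

(* The prescribed strategy of a camp with camp weight vector wc and budget k.
   a_i = s_i wc_i (phase-1 value), b_i = r_i wc_i (phase-2 value),
   M = max_i max(a_i, b_i).
   - If M <= 0 (i.e. all a_i, b_i <= 0): invest nothing.
   - If M > 0: the whole budget k is put on one node i attaining M, in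
     phase 1 if a_i = M, or in phase 2 if b_i = M.  (Thus if max a > max b
     only phase 1 is possible, if max a < max b only phase 2, and if
     equal either phase is allowed.) *)
Definition prescribed (w : 'M[R]_n) (w0 wc : 'cV[R]_n) (k : R)
    (x1 x2 : 'cV[R]_n) : Prop :=
  let a := fun i => svec w w0 i 0 * wc i 0 in
  let b := fun i => rvec w i 0 * wc i 0 in
  if [forall i, (a i <= 0) && (b i <= 0)] then x1 = 0 /\ x2 = 0
  else exists i : 'I_n,
    ((forall j, a j <= a i /\ b j <= a i) /\ x1 = point k i /\ x2 = 0) \/
    ((forall j, a j <= b i /\ b j <= b i) /\ x1 = 0 /\ x2 = point k i).

End Game.

(* Main.v *)
Require Import Defs.
From HB Require Import structures.
From mathcomp Require Import all_boot all_order all_algebra.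
From mathcomp Require Import ring lra.
Import Order.TTheory GRing.Theory Num.Theory.
Local Open Scope ring_scope.

Lemma dot_mul (R : realFieldType) (n : nat) (M : 'M[R]_n) (a u : 'cV[R]_n) :
  \sum_i a i 0 * (M *m u) i 0 = \sum_j (M^T *m a) j 0 * u j 0.
Proof.
under eq_bigr do rewrite mxE big_distrr.
under [RHS]eq_bigr do rewrite mxE big_distrl.
rewrite exchange_big; apply: eq_bigr => j _; apply: eq_bigr => i _.
by rewrite mxE /=; rewrite mulrA [a i 0 * _]mulrC.
Qed.

Lemma tr_IB (R : realFieldType) (n : nat) (w : 'M[R]_n) :
  (1%:M - w)^T = 1%:M - w^T.
Proof. by rewrite linearB /= trmx1. Qed.

Lemma closed_form (R : realFieldType) (n : nat) (w : 'M[R]_n)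
    (w0 wg wb v0 : 'cV[R]_n) x1 x2 y1 y2 :
     utility w w0 wg wb v0 x1 x2 y1 y2 =
       \sum_i svec w w0 i 0 * w0 i 0 * v0 i 0
     + \sum_i svec w w0 i 0 * wg i 0 * x1 i 0
     - \sum_i svec w w0 i 0 * wb i 0 * y1 i 0
     + \sum_i rvec w i 0 * wg i 0 * x2 i 0
     - \sum_i rvec w i 0 * wb i 0 * y2 i 0.
Proof.
rewrite /utility /phase.
set u1 := (hadam w0 v0 + _ - _).
have -> : \sum_i (invmx (1%:M - w) *m (hadam w0 (invmx (1%:M - w) *m u1)
      + hadam wg x2 - hadam wb y2)) i 0
   = \sum_i (const_mx 1 : 'cV[R]_n) i 0 * (invmx (1%:M - w) *m (hadam w0 (invmx (1%:M - w) *m u1)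
      + hadam wg x2 - hadam wb y2)) i 0.
  by apply: eq_bigr => i _; rewrite [const_mx _ _ _]mxE mul1r.
rewrite dot_mul trmx_inv tr_IB -/(rvec w).
have E1 : \sum_j rvec w j 0 * (w0 j 0 * (invmx (1%:M - w) *m u1) j 0)
   = \sum_j svec w w0 j 0 * u1 j 0.
  rewrite /svec -tr_IB -trmx_inv -dot_mul; apply: eq_bigr => j _.
  by rewrite [hadam _ _ _ _]mxE mulrA.
have E2 : \sum_j rvec w j 0 * (hadam w0 (invmx (1%:M - w) *m u1)
      + hadam wg x2 - hadam wb y2) j 0
   = \sum_j rvec w j 0 * (w0 j 0 * (invmx (1%:M - w) *m u1) j 0)
   + \sum_j (rvec w j 0 * wg j 0 * x2 j 0 - rvec w j 0 * wb j 0 * y2 j 0).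
  rewrite -big_split /=; apply: eq_bigr => j _; rewrite !mxE; ring.
rewrite E2 E1 sumrB /u1.
rewrite -!big_split /= -!sumrB -!big_split /=.
rewrite -sumrB.
apply: eq_bigr => j _; rewrite !mxE; ring.
Qed.

Section Opt.
Variables (R : realFieldType) (n : nat).

Lemma bound_lem (a b : 'I_n -> R) (M k : R) (x1 x2 : 'cV[R]_n) :
  (forall j, a j <= M /\ b j <= M) -> 0 <= M -> feasible k x1 x2 ->
  \sum_i a i * x1 i 0 + \sum_i b i * x2 i 0 <= M * k.
Proof.
move=> hab hM [h1 [h2 hs]].
rewrite -big_split /=.
apply: (le_trans (y := \sum_i M * (x1 i 0 + x2 i 0))).
  apply: ler_sum => i _; rewrite mulrDr; have [ha hb] := hab i.
  by apply: lerD; apply: ler_wpM2r.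
by rewrite -mulr_sumr; apply: ler_wpM2l.
Qed.

Lemma sum_point (a : 'I_n -> R) k i :
  \sum_j a j * point k i j 0 = a i * k.
Proof.
rewrite (bigD1 i) //= big1 ?addr0; first by rewrite mxE eqxx.
by move=> j hj; rewrite mxE (negbTE hj) mulr0.
Qed.

Lemma sum_zero (a : 'I_n -> R) :
  \sum_j a j * (0 : 'cV[R]_n) j 0 = 0.
Proof. by rewrite big1 // => j _; rewrite mxE mulr0. Qed.

Lemma feas_point (k : R) (i : 'I_n) : 0 <= k -> feasible k (point k i) 0 /\ feasible k 0 (point k i).
Proof.
move=> hk.
have hp : forall j, 0 <= point k i j 0 by move=> j; rewrite mxE; case: ifP.
have h0 : forall j, 0 <= (0 : 'cV[R]_n) j 0 by move=> j; rewrite mxE.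
have s1 : \sum_j (point k i j 0) = k.
  have := sum_point (fun _ => 1) k i.
  by under eq_bigr do rewrite mul1r; rewrite mul1r.
split; split=> //; split=> //.
  by under eq_bigr do rewrite [(0 : 'cV[R]_n) _ _]mxE addr0; rewrite s1.
by under eq_bigr do rewrite [(0 : 'cV[R]_n) _ _]mxE add0r; rewrite s1.
Qed.

Lemma opt_gen (a b : 'I_n -> R) k (hk : 0 <= k) (x1 x2 : 'cV[R]_n) :
  (if [forall i, (a i <= 0) && (b i <= 0)] then x1 = 0 /\ x2 = 0
  else exists i : 'I_n,
    ((forall j, a j <= a i /\ b j <= a i) /\ x1 = point k i /\ x2 = 0) \/
    ((forall j, a j <= b i /\ b j <= b i) /\ x1 = 0 /\ x2 = point k i)) ->
  feasible k x1 x2 /\ forall x1' x2', feasible k x1' x2' ->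
   \sum_i a i * x1' i 0 + \sum_i b i * x2' i 0 <=
   \sum_i a i * x1 i 0 + \sum_i b i * x2 i 0.
Proof.
case: ifP => hall.
  move=> [-> ->]; split.
    split; first by move=> j; rewrite mxE.
    split; first by move=> j; rewrite mxE.
    by rewrite big1 // => j _; rewrite mxE addr0.
  move=> x1' x2' hf; rewrite !sum_zero addr0.
  have := @bound_lem a b 0 k _ _ _ (lexx 0) hf; rewrite mul0r; apply.
  by move=> j; move/forallP: hall => /(_ j) /andP.
have [j0 hj0] : exists j, ~~ ((a j <= 0) && (b j <= 0)).
  by move/negbT: hall; rewrite negb_forall => /existsP.
have pos : forall M, (forall j, a j <= M /\ b j <= M) -> 0 <= M.
  move=> M hM; move: hj0; rewrite negb_and -!ltNge => /orP [] h.
    by apply: ltW; apply: (lt_le_trans h); case: (hM j0).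
  by apply: ltW; apply: (lt_le_trans h); case: (hM j0).
move=> [i [[hM [-> ->]] | [hM [-> ->]]]]; have [f1 f2] := feas_point k i hk.
  split=> // x1' x2' hf; rewrite sum_point sum_zero addr0.
  exact: bound_lem hM (pos _ hM) hf.
split=> // x1' x2' hf; rewrite sum_point sum_zero add0r.
exact: bound_lem hM (pos _ hM) hf.
Qed.
End Opt.
Theorem mainTheorem1 (R : realFieldType) (n : nat) (w : 'M[R]_n)
    (w0 wg wb v0 : 'cV[R]_n) (kg kb : R)
    (hw : forall i, \sum_j `|w i j| < 1)
    (hw' : forall i, `|w0 i 0| + \sum_j `|w i j| + `|wg i 0| + `|wb i 0| <= 1)
    (hkg : 0 <= kg) (hkb : 0 <= kb) :
  (* closed form of the good camp's utility *)
  (forall x1 x2 y1 y2 : 'cV[R]_n,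
     utility w w0 wg wb v0 x1 x2 y1 y2 =
       \sum_i svec w w0 i 0 * w0 i 0 * v0 i 0
     + \sum_i svec w w0 i 0 * wg i 0 * x1 i 0
     - \sum_i svec w w0 i 0 * wb i 0 * y1 i 0
     + \sum_i rvec w i 0 * wg i 0 * x2 i 0
     - \sum_i rvec w i 0 * wb i 0 * y2 i 0)
  /\
  (* the prescribed good strategy is optimal against every bad strategy *)
  (forall x1 x2, prescribed w w0 wg kg x1 x2 -> feasible kg x1 x2 /\
     forall y1 y2, feasible kb y1 y2 ->
     forall x1' x2', feasible kg x1' x2' ->
       utility w w0 wg wb v0 x1' x2' y1 y2 <= utility w w0 wg wb v0 x1 x2 y1 y2)
  /\
  (* the prescribed bad strategy is optimal against every good strategy *)
  (forall y1 y2, prescribed w w0 wb kb y1 y2 -> feasible kb y1 y2 /\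
     forall x1 x2, feasible kg x1 x2 ->
     forall y1' y2', feasible kb y1' y2' ->
       utility w w0 wg wb v0 x1 x2 y1 y2 <= utility w w0 wg wb v0 x1 x2 y1' y2')
  /\
  (* hence any profile of prescribed strategies is a Nash equilibrium *)
  (forall x1 x2 y1 y2, prescribed w w0 wg kg x1 x2 -> prescribed w w0 wb kb y1 y2 ->
     (forall x1' x2', feasible kg x1' x2' ->
        utility w w0 wg wb v0 x1' x2' y1 y2 <= utility w w0 wg wb v0 x1 x2 y1 y2) /\
     (forall y1' y2', feasible kb y1' y2' ->
        utility w w0 wg wb v0 x1 x2 y1 y2 <= utility w w0 wg wb v0 x1 x2 y1' y2')).
Proof.
have G : forall x1 x2, prescribed w w0 wg kg x1 x2 -> feasible kg x1 x2 /\
     forall y1 y2, feasible kb y1 y2 ->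
     forall x1' x2', feasible kg x1' x2' ->
       utility w w0 wg wb v0 x1' x2' y1 y2 <= utility w w0 wg wb v0 x1 x2 y1 y2.
  move=> x1 x2 hp.
  have [hf hopt] := @opt_gen R n (fun i => svec w w0 i 0 * wg i 0)
     (fun i => rvec w i 0 * wg i 0) kg hkg x1 x2 hp.
  split=> // y1 y2 _ x1' x2' hf'; rewrite !closed_form.
  have := hopt x1' x2' hf'; rewrite /=; lra.
have B : forall y1 y2, prescribed w w0 wb kb y1 y2 -> feasible kb y1 y2 /\
     forall x1 x2, feasible kg x1 x2 ->
     forall y1' y2', feasible kb y1' y2' ->
       utility w w0 wg wb v0 x1 x2 y1 y2 <= utility w w0 wg wb v0 x1 x2 y1' y2'.
  move=> y1 y2 hp.
  have [hf hopt] := @opt_gen R n (fun i => svec w w0 i 0 * wb i 0)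
     (fun i => rvec w i 0 * wb i 0) kb hkb y1 y2 hp.
  split=> // x1 x2 _ y1' y2' hf'; rewrite !closed_form.
  have := hopt y1' y2' hf'; rewrite /=; lra.
split; first exact: closed_form.
split=> //; split=> //.
move=> x1 x2 y1 y2 hx hy; have [fx gx] := G _ _ hx; have [fy gy] := B _ _ hy.
split=> ? ? ?; [exact: gx | exact: gy].
Qed.
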